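(* Let $y_1,y_2,y_3\in Y(\mathfrak{o})$, $d\in D(3)$, $u\in U(3)$, $C\in\Gamma_\infty(3)$, and let $A=\varphi_2(y_1^{-1})\varphi_1(y_2^{-1})\varphi_2(y_3^{-1})\,d\,u\,C$. (1) If $A\in\Delta_1$ then $y_2\neq I_2$. (2) If $A\in\Delta_{1,1}$ then $y_3\neq I_2$.
   Context: Let $\omega=e^{2\pi i/3}$, $\mathfrak{o}=\mathbb{Z}[\omega]$, $\mathfrak{o}^\times$ its unit group. Fix representatives of nonzero elements of $\mathfrak{o}$ modulo units (''$c\in(\mathfrak{o}-\{0\})/\mathfrak{o}^\times$'') and, for each nonzero $c$, representatives of $\mathfrak{o}/c\mathfrak{o}$ (''$a\in\mathfrak{o}/c\mathfrak{o}$''). $Y(\mathfrak{o})=\{\begin{pmatrix}a&b\\c&d\end{pmatrix}\in SL_2(\mathfrak{o}) : c\in(\mathfrak{o}-\{0\})/\mathfrak{o}^\times,\ a\in\mathfrak{o}/c\mathfrak{o}\}\cup\{I_2\}$. $\Gamma(3)=\{A\in SL_3(\mathfrak{o}):A\equiv I_3\pmod{3\mathfrak{o}}\}$ (entrywise), $\Gamma_\infty(3)$ its subgroup of upper triangular unipotent matrices. $D(3)$: diagonal $\mathrm{diag}(i,j,k)$, $i,j,k\in\mathfrak{o}$, $ijk=1$. $U(3)$: matrices $\begin{pmatrix}1&\alpha&\beta\\&1&\gamma\\&&1\end{pmatrix}$ with $\alpha,\beta,\gamma\in\{0,1,2\}+\{0,1,2\}\omega$. For $y=\begin{pmatrix}a&b\\c&d\end{pmatrix}$,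 $\varphi_1(y)=\begin{pmatrix}a&b&0\\c&d&0\\0&0&1\end{pmatrix}$, $\varphi_2(y)=\begin{pmatrix}1&0&0\\0&a&b\\0&c&d\end{pmatrix}$. For $A=(a_{ij})\in SL_3(\mathfrak{o})$: $\Delta_1=\{A: a_{21}\neq0 \text{ or } a_{31}\neq0\}$ and $\Delta_{1,1}=\{A : a_{21}a_{32}-a_{22}a_{31}\neq0\}$. *)

(* Defs.v *)
(* o = Z[omega] is modelled as a subring of algC. *)
From HB Require Import structures.
From mathcomp Require Import all_boot all_order all_algebra all_field.
Set Implicit Arguments. Unset Strict Implicit. Unset Printing Implicit Defensive.
Import Order.TTheory GRing.Theory Num.Theory.
Local Open Scope ring_scope.

(* omega = e^{2 pi i/3} = (-1 + i sqrt 3)/2 *)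
Definition omega : algC := (-1 + 'i * sqrtC 3) / 2.

Definition inO (x : algC) : Prop :=
  exists a b : int, x = a%:~R + b%:~R * omega.

Definition unitO (u : algC) : Prop := inO u /\ u != 0 /\ inO u^-1.

Definition congO (c a b : algC) : Prop := exists k, inO k /\ a - b = c * k.

(* RepC : the fixed representatives of (o - {0}) / o^x ;
   RepA c : the fixed representatives of o / c o (for each such c). *)
Definition rep_system (RepC : algC -> Prop) (RepA : algC -> algC -> Prop) : Prop :=
  (forall c, RepC c -> inO c /\ c != 0) /\
  (forall x, inO x -> x != 0 ->
     exists! c, RepC c /\ exists u, unitO u /\ x = u * c) /\
  (forall c, RepC c ->
     (forall a, RepA c a -> inO a) /\
     (forall x, inO x -> exists! a, RepA c a /\ congO c x a)).

Definition matO n (M : 'M[algC]_n) : Prop := forall i j, inO (M i j).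
Definition SLO n (M : 'M[algC]_n) : Prop := matO M /\ \det M = 1.

Definition j0 : 'I_2 := inord 0.
Definition j1 : 'I_2 := inord 1.
Definition i0 : 'I_3 := inord 0.
Definition i1 : 'I_3 := inord 1.
Definition i2 : 'I_3 := inord 2.

Definition inY (RepC : algC -> Prop) (RepA : algC -> algC -> Prop)
    (y : 'M[algC]_2) : Prop :=
  (SLO y /\ RepC (y j1 j0) /\ RepA (y j1 j0) (y j0 j0)) \/ y = 1%:M.

Definition inGamma3 (A : 'M[algC]_3) : Prop :=
  SLO A /\ forall i j : 'I_3, congO 3 (A i j) ((i == j)%:R).
Definition inGammaInf3 (A : 'M[algC]_3) : Prop :=
  inGamma3 A /\ (forall i j : 'I_3, (j < i)%N -> A i j = 0)
             /\ (forall i, A i i = 1).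

Definition inD3 (d : 'M[algC]_3) : Prop :=
  exists x y z, [/\ inO x, inO y, inO z, x * y * z = 1 &
     d = \matrix_(i < 3, j < 3)
           (if i == j then (if i == i0 then x else if i == i1 then y else z)
            else 0)].

Definition inS3 (x : algC) : Prop :=
  exists a b : 'I_3, x = (a : nat)%:R + (b : nat)%:R * omega.

Definition inU3 (u : 'M[algC]_3) : Prop :=
  exists al be ga, [/\ inS3 al, inS3 be, inS3 ga &
    u = \matrix_(i < 3, j < 3)
          (if i == j then 1
           else if (i == i0) && (j == i1) then al
           else if (i == i0) && (j == i2) then be
           else if (i == i1) && (j == i2) then ga else 0)].

Definition phi1 (y : 'M[algC]_2) : 'M[algC]_3 :=
  \matrix_(i < 3, j < 3)
    (if ((i : nat) < 2)%N && ((j : nat) < 2)%N then y (inord i) (inord j)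
     else (i == j)%:R).

Definition phi2 (y : 'M[algC]_2) : 'M[algC]_3 :=
  \matrix_(i < 3, j < 3)
    (if (0 < (i : nat))%N && (0 < (j : nat))%N then y (inord i.-1) (inord j.-1)
     else (i == j)%:R).

(* Delta_1 and Delta_{1,1} (a_{kl} = A (k-1) (l-1)) *)
Definition inDelta1 (A : 'M[algC]_3) : Prop := A i1 i0 != 0 \/ A i2 i0 != 0.
Definition inDelta11 (A : 'M[algC]_3) : Prop :=
  A i1 i0 * A i2 i1 - A i1 i1 * A i2 i0 != 0.

(* Main.v *)
Require Import Defs.
From mathcomp Require Import all_boot all_order all_algebra all_field.
Import GRing.Theory Num.Theory.
Local Open Scope ring_scope.
Lemma v0 : val i0 = 0%N. Proof. exact: inordK. Qed.
Lemma v1 : val i1 = 1%N. Proof. exact: inordK. Qed.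
Lemma v2 : val i2 = 2%N. Proof. exact: inordK. Qed.
Lemma w0 : val j0 = 0%N. Proof. exact: inordK. Qed.
Lemma w1 : val j1 = 1%N. Proof. exact: inordK. Qed.
Lemma mulmx3E (M N : 'M[algC]_3) i j :
  (M *m N) i j = M i i0 * N i0 j + M i i1 * N i1 j + M i i2 * N i2 j.
Proof.
rewrite !mxE !big_ord_recl big_ord0 addr0 addrA.
by congr (M i _ * N _ j + M i _ * N _ j + M i _ * N _ j); apply: val_inj; rewrite /= ?v0 ?v1 ?v2.
Qed.
Ltac ent := rewrite /phi1 /phi2 mxE ?v0 ?v1 ?v2 /= ?eqxx //; rewrite -val_eqE /= ?v0 ?v1 ?v2 /=; exact: mulr0n.
Lemma phi1_00 y : phi1 y i0 i0 = y j0 j0. Proof. ent. Qed.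
Lemma phi1_01 y : phi1 y i0 i1 = y j0 j1. Proof. ent. Qed.
Lemma phi1_02 y : phi1 y i0 i2 = 0. Proof. ent. Qed.
Lemma phi1_10 y : phi1 y i1 i0 = y j1 j0. Proof. ent. Qed.
Lemma phi1_11 y : phi1 y i1 i1 = y j1 j1. Proof. ent. Qed.
Lemma phi1_12 y : phi1 y i1 i2 = 0. Proof. ent. Qed.
Lemma phi1_20 y : phi1 y i2 i0 = 0. Proof. ent. Qed.
Lemma phi1_21 y : phi1 y i2 i1 = 0. Proof. ent. Qed.
Lemma phi1_22 y : phi1 y i2 i2 = 1. Proof. ent. Qed.
Lemma phi2_00 y : phi2 y i0 i0 = 1. Proof. ent. Qed.
Lemma phi2_01 y : phi2 y i0 i1 = 0. Proof. ent. Qed.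
Lemma phi2_02 y : phi2 y i0 i2 = 0. Proof. ent. Qed.
Lemma phi2_10 y : phi2 y i1 i0 = 0. Proof. ent. Qed.
Lemma phi2_11 y : phi2 y i1 i1 = y j0 j0. Proof. ent. Qed.
Lemma phi2_12 y : phi2 y i1 i2 = y j0 j1. Proof. ent. Qed.
Lemma phi2_20 y : phi2 y i2 i0 = 0. Proof. ent. Qed.
Lemma phi2_21 y : phi2 y i2 i1 = y j1 j0. Proof. ent. Qed.
Lemma phi2_22 y : phi2 y i2 i2 = y j1 j1. Proof. ent. Qed.
From mathcomp Require Import ring.
Lemma id_01 : (1%:M : 'M[algC]_2) j0 j1 = 0. Proof. by rewrite mxE -val_eqE /= w0 w1. Qed.
Lemma id_10 : (1%:M : 'M[algC]_2) j1 j0 = 0. Proof. by rewrite mxE -val_eqE /= w0 w1. Qed.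
Lemma id_00 : (1%:M : 'M[algC]_2) j0 j0 = 1. Proof. by rewrite mxE eqxx. Qed.
Lemma id_11 : (1%:M : 'M[algC]_2) j1 j1 = 1. Proof. by rewrite mxE eqxx. Qed.

Definition upper (M : 'M[algC]_3) := forall i j : 'I_3, (j < i)%N -> M i j = 0.
Lemma upperM M N : upper M -> upper N -> upper (M *m N).
Proof.
move=> hM hN i j lt; rewrite mxE big1 // => k _.
case: (ltnP k i) => h; first by rewrite hM // mul0r.
by rewrite hN ?mulr0 // (leq_trans lt h).
Qed.
Lemma up10 {T} : upper T -> T i1 i0 = 0. Proof. by move=> h; apply: h; rewrite v0 v1. Qed.
Lemma up20 {T} : upper T -> T i2 i0 = 0. Proof. by move=> h; apply: h; rewrite v0 v2. Qed.
Lemma up21 {T} : upper T -> T i2 i1 = 0. Proof. by move=> h; apply: h; rewrite v1 v2. Qed.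

Ltac expand h := rewrite !mulmx3E ?phi1_00 ?phi1_01 ?phi1_02 ?phi1_10 ?phi1_11 ?phi1_12 ?phi1_20 ?phi1_21 ?phi1_22
  ?phi2_00 ?phi2_01 ?phi2_02 ?phi2_10 ?phi2_11 ?phi2_12 ?phi2_20 ?phi2_21 ?phi2_22
  ?id_00 ?id_01 ?id_10 ?id_11 ?(up10 h) ?(up20 h) ?(up21 h).

Lemma L1 X Z T : upper T ->
  (phi2 X *m phi1 1%:M *m phi2 Z *m T) i1 i0 = 0 /\
  (phi2 X *m phi1 1%:M *m phi2 Z *m T) i2 i0 = 0.
Proof. move=> h; split; expand h; ring. Qed.

Lemma L2 X Y T : upper T ->
  let A := phi2 X *m phi1 Y *m phi2 1%:M *m T in
  A i1 i0 * A i2 i1 - A i1 i1 * A i2 i0 = 0.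
Proof. move=> h /=; expand h; ring. Qed.

Ltac upd := let i := fresh "i" in let j := fresh "j" in let lt := fresh in
  move=> [[|[|[|?]]] ?] [[|[|[|?]]] ?] //= _; rewrite mxE -!val_eqE /= ?v0 ?v1 ?v2.

Theorem lemma2p12 (RepC : algC -> Prop) (RepA : algC -> algC -> Prop)
  (y1 y2 y3 : 'M[algC]_2) (d u C : 'M[algC]_3) :
  rep_system RepC RepA ->
  inY RepC RepA y1 -> inY RepC RepA y2 -> inY RepC RepA y3 ->
  inD3 d -> inU3 u -> inGammaInf3 C ->
  let A := phi2 (invmx y1) *m phi1 (invmx y2) *m phi2 (invmx y3) *m d *m u *m C in
  (inDelta1 A -> y2 <> 1%:M) /\ (inDelta11 A -> y3 <> 1%:M).
Proof.
move=> _ _ _ _ [x [y [z [_ _ _ _ ed]]]] [al [be [ga [_ _ _ eu]]]] [_ [hC _]] A.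
have hd : upper d by rewrite ed; upd.
have hu : upper u by rewrite eu; upd.
have hT : upper (d *m u *m C) by apply: upperM; [apply: upperM|].
have eA : A = phi2 (invmx y1) *m phi1 (invmx y2) *m phi2 (invmx y3) *m (d *m u *m C)
  by rewrite /A !mulmxA.
split.
- move=> hD e2; rewrite e2 invmx1 in eA.
  have [a b] := L1 (invmx y1) (invmx y3) _ hT.
  by move: hD; rewrite /inDelta1 eA a b eqxx; case.
- move=> hD e3; rewrite e3 invmx1 in eA.
  have := L2 (invmx y1) (invmx y2) _ hT.
  by move: hD; rewrite /inDelta11 eA /= => /eqP.
Qed.
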